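(* For every $S\in\{\tfrac12,1,\tfrac32,\dots\}$, every $L\in\mathbb N$ and every $\beta>0$, $$\frac{\langle D_L|e^{-\beta H^{(L)}_{\mathrm{AF}}}|D_L\rangle}{\operatorname{tr}e^{-\beta H^{(L)}_{\mathrm{AF}}}}\ \ge\ \frac1{(2S+1)^L}.$$ In particular the seed vector $|D_L\rangle$ has nonzero projection onto the ground-state eigenspace of $H^{(L)}_{\mathrm{AF}}$.
   Context: $\Lambda_L=\{-L+1,\dots,L\}$, $\mathcal H_L=\bigotimes_{v\in\Lambda_L}\mathbb C^{2S+1}$, with $|m\rangle$ ($m=-S,\dots,S$) the eigenbasis of the spin-$S$ operator $S^z$ and $|m,m'\rangle_{u,v}=|m\rangle_u\otimes|m'\rangle_v$. $P^{(0)}_{u,v}=\frac1{2S+1}\sum_{m,m'=-S}^S(-1)^{m-m'}(|m,-m\rangle\langle m',-m'|)_{u,v}$ (the projection onto the singlet of $\mathbf S_u+\mathbf S_v$), $H^{(L)}_{\mathrm{AF}}=-(2S+1)\sum_{u=-L+1}^{L-1}P^{(0)}_{u,u+1}$, and $|D_L\rangle=\bigotimes_{j=1}^L\sum_{m=-S}^S(-1)^m|m,-m\rangle_{-L+2j-1,-L+2j}$. *)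

(* Defs.v *)
From Stdlib Require Import Reals Lra Lia Arith.
Open Scope R_scope.

Fixpoint fsum (n : nat) (f : nat -> R) : R :=
  match n with O => 0 | S n' => fsum n' f + f n' end.
Fixpoint fprod (n : nat) (f : nat -> R) : R :=
  match n with O => 1 | S n' => fprod n' f * f n' end.

(* Spin S is encoded by twoS = 2S (a positive natural number); the local
   dimension is d = 2S+1.  The local basis vector |m>, m = -S..S, is encoded by
   the digit k = m + S in {0,..,d-1}; then -m corresponds to d-1-k.
   Sites v in Lambda_L = {-L+1,..,L} are encoded by positions p = v+L-1 in
   {0,..,2L-1}.  A basis vector of H_L (a configuration) is encoded by the
   natural number a < d^(2L) whose base-d digit at position p is the k-value
   at that site. *)
Definition ldim (twoS : nat) : nat := S twoS.
Definition hdim (twoS L : nat) : nat := (ldim twoS ^ (2 * L))%nat.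

Definition digit (d a p : nat) : nat := ((a / d ^ p) mod d)%nat.

Definition ind (b : bool) : R := if b then 1 else 0.

(* Matrix element <a| P^(0)_{u,u+1} |b>, where u+1 has position p+1:
   (1/d) (-1)^(m_a - m_b) if a = |m_a,-m_a>, b = |m_b,-m_b> on (p,p+1)
   and a, b agree elsewhere.  (-1)^(m_a-m_b) = (-1)^(k_a+k_b). *)
Definition Psing (d p a b : nat) : R :=
  / INR d *
  (ind ((a mod d ^ p =? b mod d ^ p)%nat
        && (a / d ^ (p + 2) =? b / d ^ (p + 2))%nat
        && (digit d a (S p) =? d - 1 - digit d a p)%nat
        && (digit d b (S p) =? d - 1 - digit d b p)%nat)
   * (-1) ^ (digit d a p + digit d b p)).

Definition Ham (twoS L : nat) (a b : nat) : R :=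
  - INR (ldim twoS) * fsum (2 * L - 1) (fun p => Psing (ldim twoS) p a b).

(* |D_L> = tensor_{j=1}^L sum_m (-1)^m |m,-m>_{-L+2j-1,-L+2j};
   sites -L+2j-1, -L+2j have positions 2j-2, 2j-1.  The sign (-1)^m is taken
   as (-1)^(m+S) = (-1)^k, which differs by a global phase ((-1)^(-S))^L that
   does not affect <D|X|D>. *)
Definition Dvec (twoS L : nat) (a : nat) : R :=
  let d := ldim twoS in
  fprod L (fun j =>
    ind (digit d a (2 * j + 1) =? d - 1 - digit d a (2 * j))%nat
    * (-1) ^ (digit d a (2 * j))).

Fixpoint matpow (N : nat) (M : nat -> nat -> R) (k : nat) : nat -> nat -> R :=
  match k with
  | O => fun i j => ind (i =? j)%nat
  | S k' => fun i j => fsum N (fun l => matpow N M k' i l * M l j)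
  end.

Definition is_mexp (N : nat) (M : nat -> nat -> R) (E : nat -> nat -> R) : Prop :=
  forall i j, (i < N)%nat -> (j < N)%nat ->
    Un_cv (fun n => sum_f_R0 (fun k => matpow N M k i j / INR (fact k)) n) (E i j).

Definition mapply (N : nat) (M : nat -> nat -> R) (v : nat -> R) (i : nat) : R :=
  fsum N (fun j => M i j * v j).

Definition is_ground_energy (N : nat) (M : nat -> nat -> R) (E0 : R) : Prop :=
  (exists phi : nat -> R, (exists i, (i < N)%nat /\ phi i <> 0) /\
     forall i, (i < N)%nat -> mapply N M phi i = E0 * phi i) /\
  (forall (lam : R) (phi : nat -> R), (exists i, (i < N)%nat /\ phi i <> 0) ->
     (forall i, (i < N)%nat -> mapply N M phi i = lam * phi i) -> E0 <= lam).

(* Main.v *)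
From Stdlib Require Import Reals Lra Lia Arith List Bool Classical.
Require Import Defs.
Open Scope R_scope.

Module P1.
Open Scope R_scope.

Lemma fsum_ext n f g : (forall i, (i < n)%nat -> f i = g i) -> fsum n f = fsum n g.
Proof. induction n; simpl; intros H; [reflexivity|]. rewrite IHn, H; auto; intros; apply H; lia. Qed.

Lemma fsum_le n f g : (forall i, (i < n)%nat -> f i <= g i) -> fsum n f <= fsum n g.
Proof. induction n; simpl; intros H; [lra|]. assert (f n <= g n) by (apply H; lia).
  assert (fsum n f <= fsum n g) by (apply IHn; intros; apply H; lia). lra. Qed.

Lemma fsum_nonneg n f : (forall i, (i < n)%nat -> 0 <= f i) -> 0 <= fsum n f.
Proof. induction n; simpl; intros H; [lra|]. assert (0 <= f n) by (apply H; lia).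
  assert (0 <= fsum n f) by (apply IHn; intros; apply H; lia). lra. Qed.

Lemma fsum_plus n f g : fsum n (fun i => f i + g i) = fsum n f + fsum n g.
Proof. induction n; simpl; [lra|]. rewrite IHn; lra. Qed.

Lemma fsum_scal_l n c f : fsum n (fun i => c * f i) = c * fsum n f.
Proof. induction n; simpl; [lra|]. rewrite IHn; lra. Qed.

Lemma fsum_scal_r n c f : fsum n (fun i => f i * c) = fsum n f * c.
Proof. induction n; simpl; [lra|]. rewrite IHn; lra. Qed.

Lemma fsum_swap n m f : fsum n (fun i => fsum m (fun j => f i j)) = fsum m (fun j => fsum n (fun i => f i j)).
Proof. induction n; simpl. - induction m; simpl; [lra|]. rewrite <- IHm; lra.
  - rewrite IHn, <- fsum_plus. reflexivity. Qed.

Lemma fsum_single_le n f k : (forall i, (i < n)%nat -> 0 <= f i) -> (k < n)%nat -> f k <= fsum n f.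
Proof. induction n; simpl; intros H Hk; [lia|].
  assert (0 <= f n) by (apply H; lia).
  destruct (Nat.eq_dec k n). - subst. assert (0 <= fsum n f) by (apply fsum_nonneg; intros; apply H; lia). lra.
  - assert (f k <= fsum n f) by (apply IHn; [intros; apply H; lia| lia]). lra. Qed.

Lemma fsum_pos_ex n f : 0 < fsum n f -> exists i, (i < n)%nat /\ 0 < f i.
Proof. intros H. destruct (Classical_Prop.classic (exists i, (i < n)%nat /\ 0 < f i)) as [?|Hn]; auto.
  exfalso. assert (fsum n f <= fsum n (fun _ => 0)).
  { apply fsum_le. intros i Hi. destruct (Rle_dec (f i) 0); auto. exfalso; apply Hn; exists i; split; auto; lra. }
  assert (fsum n (fun _ => 0) = 0) by (clear; induction n; simpl; lra). lra. Qed.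

Lemma fsum_const n c : fsum n (fun _ => c) = INR n * c.
Proof. induction n; simpl fsum; [simpl; lra|]. rewrite IHn, S_INR; lra. Qed.

Lemma fsum_zero n f : (forall i, (i < n)%nat -> f i = 0) -> fsum n f = 0.
Proof. intros H. rewrite (fsum_ext n f (fun _ => 0)) by auto. rewrite fsum_const; lra. Qed.

Lemma fprod_mult n f g : fprod n (fun i => f i * g i) = fprod n f * fprod n g.
Proof. induction n; simpl; [lra|]. rewrite IHn; lra. Qed.

Lemma fprod_ext n f g : (forall i, (i < n)%nat -> f i = g i) -> fprod n f = fprod n g.
Proof. induction n; simpl; intros H; [reflexivity|]. rewrite IHn, H; auto; intros; apply H; lia. Qed.

Fixpoint lsum (l : list nat) (g : nat -> R) : R :=
  match l with nil => 0 | x :: l' => g x + lsum l' g end.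

Lemma fsum_delta N x g : (x < N)%nat -> fsum N (fun i => if Nat.eq_dec i x then g i else 0) = g x.
Proof. induction N; intros Hx; [lia|]. simpl. destruct (Nat.eq_dec N x).
  - subst. rewrite fsum_zero; [lra|]. intros i Hi. destruct (Nat.eq_dec i x); [lia|auto].
  - rewrite IHN by lia. lra. Qed.

Lemma lsum_indic l N g : NoDup l -> (forall x, In x l -> (x < N)%nat) ->
  lsum l g = fsum N (fun i => if in_dec Nat.eq_dec i l then g i else 0).
Proof. induction l as [|x l IH]; intros Hnd Hin; simpl.
  - rewrite fsum_zero; auto.
  - inversion Hnd; subst. rewrite IH; auto; [|intros; apply Hin; right; auto].
    rewrite <- (fsum_delta N x g) by (apply Hin; left; auto). rewrite <- fsum_plus. apply fsum_ext. intros i Hi.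
    repeat match goal with |- context [in_dec Nat.eq_dec ?a ?b] => destruct (in_dec Nat.eq_dec a b) end;
    repeat match goal with |- context [Nat.eq_dec ?a ?b] => destruct (Nat.eq_dec a b) end; subst; simpl; try lra;
    try tauto; exfalso; simpl in *; tauto.
Qed.

Lemma lsum_nodup_le N l g : NoDup l -> (forall x, In x l -> (x < N)%nat) ->
  (forall i, (i < N)%nat -> 0 <= g i) -> lsum l g <= fsum N g.
Proof. intros Hnd Hin Hg. rewrite (lsum_indic l N g) by auto. apply fsum_le. intros i Hi.
  destruct (in_dec Nat.eq_dec i l); [lra| apply Hg; auto]. Qed.

Lemma lsum_map l f g : lsum (map f l) g = lsum l (fun x => g (f x)).
Proof. induction l; simpl; auto. rewrite IHl; auto. Qed.

Lemma fsum_lsum N g : fsum N g = lsum (seq 0 N) g.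
Proof. induction N; [simpl; auto|]. simpl fsum. rewrite seq_S, IHN. generalize (seq 0 N). intros l.
  simpl (0 + N)%nat. induction l; simpl; [lra|]. rewrite <- IHl; lra. Qed.

Lemma fsum_inj_le N f g : (forall i, (i < N)%nat -> (f i < N)%nat) ->
  (forall i j, (i < N)%nat -> (j < N)%nat -> f i = f j -> i = j) ->
  (forall i, (i < N)%nat -> 0 <= g i) -> fsum N (fun i => g (f i)) <= fsum N g.
Proof. intros Hr Hi Hg. rewrite fsum_lsum, <- lsum_map. apply lsum_nodup_le; auto.
  - apply NoDup_map_NoDup_ForallPairs; [|apply seq_NoDup].
    intros x y Hx Hy. apply in_seq in Hx; apply in_seq in Hy. apply Hi; lia.
  - intros x Hx. apply in_map_iff in Hx. destruct Hx as [y [<- Hy]]. apply in_seq in Hy. apply Hr; lia.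
Qed.

End P1.
Import P1.

Module P2.

Local Open Scope nat_scope.

Section Dig.
Variable d : nat.
Hypothesis Hd : (1 < d)%nat.

Lemma pow_pos p : (0 < d ^ p)%nat.
Proof. apply Nat.neq_0_lt_0, Nat.pow_nonzero; lia. Qed.

Lemma digit_lt a p : (digit d a p < d)%nat.
Proof. unfold digit. apply Nat.mod_upper_bound; lia. Qed.

Lemma mod_pow_S a p : (a mod d ^ S p = a mod d ^ p + d ^ p * digit d a p)%nat.
Proof. rewrite Nat.pow_succ_r', Nat.mul_comm, Nat.Div0.mod_mul_r. reflexivity. Qed.

Lemma mod_lt a p : (a mod d ^ p < d ^ p)%nat.
Proof. apply Nat.mod_upper_bound. generalize (pow_pos p); lia. Qed.

Lemma mod_eq_digits a b p : (a mod d ^ p = b mod d ^ p)%nat <-> (forall q, (q < p)%nat -> digit d a q = digit d b q).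
Proof. induction p.
  - rewrite Nat.pow_0_r, !Nat.mod_1_r. split; intros; [lia|auto].
  - rewrite !mod_pow_S. generalize (mod_lt a p) (mod_lt b p) (digit_lt a p) (digit_lt b p) (pow_pos p). intros A1 A2 A3 A4 A5.
    split.
    + intros H q Hq. assert (a mod d ^ p = b mod d ^ p /\ digit d a p = digit d b p) as [H1 H2].
      { assert (Hdiv: ((a mod d ^ p + d ^ p * digit d a p) / d^p = (b mod d ^ p + d ^ p * digit d b p) / d^p)%nat) by (rewrite H; auto).
        rewrite !(Nat.mul_comm (d^p)), !Nat.div_add in Hdiv by lia. rewrite !Nat.div_small in Hdiv by lia.
        simpl in Hdiv. split; lia. }
      destruct (Nat.eq_dec q p); [subst; auto|]. apply IHp; auto; lia.
    + intros H. rewrite (proj2 IHp) by (intros; apply H; lia). rewrite H by lia. reflexivity.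
Qed.

Lemma digit_div a k i : digit d (a / d ^ k) i = digit d a (k + i).
Proof. unfold digit. rewrite Nat.Div0.div_div, Nat.pow_add_r. reflexivity. Qed.

Lemma eq_digits a b : (forall q, digit d a q = digit d b q) -> a = b.
Proof. intros H. set (M := (a + b + 1)%nat).
  assert (a < d ^ M)%nat by (generalize (Nat.pow_gt_lin_r d M Hd); lia).
  assert (b < d ^ M)%nat by (generalize (Nat.pow_gt_lin_r d M Hd); lia).
  rewrite <- (Nat.mod_small a (d^M)), <- (Nat.mod_small b (d^M)) by auto.
  apply mod_eq_digits. auto. Qed.

Lemma div_eq_digits a b k : (a / d ^ k = b / d ^ k)%nat <-> (forall q, (k <= q)%nat -> digit d a q = digit d b q).
Proof. split.
  - intros H q Hq. replace q with (k + (q - k))%nat by lia. rewrite <- !digit_div, H. reflexivity.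
  - intros H. apply eq_digits. intros i. rewrite !digit_div. apply H; lia. Qed.

Lemma digit_big a n q : (a < d ^ n)%nat -> (n <= q)%nat -> digit d a q = 0%nat.
Proof. intros Ha Hq. unfold digit. rewrite Nat.div_small. apply Nat.Div0.mod_0_l.
  apply Nat.lt_le_trans with (d^n); auto. apply Nat.pow_le_mono_r; lia. Qed.

Fixpoint enc (n : nat) (f : nat -> nat) : nat :=
  match n with O => O | S n' => (enc n' f + f n' * d ^ n')%nat end.

Lemma enc_lt n f : (forall q, (q < n)%nat -> (f q < d)%nat) -> (enc n f < d ^ n)%nat.
Proof. induction n; simpl; intros H; [lia|]. assert (enc n f < d ^ n)%nat by (apply IHn; intros; apply H; lia).
  assert (f n < d)%nat by (apply H; lia). assert (f n <= d - 1)%nat by lia.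
  assert (f n * d ^ n <= (d-1) * d^n)%nat by (apply Nat.mul_le_mono_r; auto).
  assert (d * d ^ n = d^n + (d-1) * d^n)%nat.
  { replace d with (1 + (d - 1))%nat at 1 by lia. lia. }
  rewrite H4. set (X := ((d-1) * d^n)%nat) in *. set (Y := (d^n)%nat) in *. set (Z := (f n * Y)%nat) in *. lia. Qed.

Lemma digit_enc n f q : (forall q, (q < n)%nat -> (f q < d)%nat) -> (q < n)%nat -> digit d (enc n f) q = f q.
Proof. induction n; intros H Hq; [lia|]. simpl.
  assert (He: (enc n f < d ^ n)%nat) by (apply enc_lt; intros; apply H; lia).
  unfold digit. destruct (Nat.eq_dec q n).
  - subst. rewrite Nat.div_add by (generalize (pow_pos n); lia). rewrite Nat.div_small by auto.
    simpl. apply Nat.mod_small. apply H; lia.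
  - replace (f n * d ^ n)%nat with ((f n * d ^ (n - q - 1) * d) * d ^ q)%nat.
    + rewrite Nat.div_add by (generalize (pow_pos q); lia). rewrite Nat.Div0.mod_add.
      fold (digit d (enc n f) q). apply IHn; [intros; apply H|]; lia.
    + rewrite <- !Nat.mul_assoc. f_equal. rewrite <- Nat.pow_succ_r', <- Nat.pow_add_r. f_equal. lia.
Qed.

Lemma digit_enc_big n f q : (forall q, (q < n)%nat -> (f q < d)%nat) -> (n <= q)%nat -> digit d (enc n f) q = 0%nat.
Proof. intros. apply digit_big with n; auto. apply enc_lt; auto. Qed.

Lemma enc_digits n a : (a < d ^ n)%nat -> enc n (digit d a) = a.
Proof. intros Ha. apply eq_digits. intros q. destruct (Nat.lt_ge_cases q n).
  - apply digit_enc; auto. intros; apply digit_lt.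
  - rewrite digit_enc_big, (digit_big a n q); auto. intros; apply digit_lt. Qed.

End Dig.

End P2.
Import P2.

Module P3.
Open Scope R_scope.

Lemma ind_nonneg b : 0 <= ind b.
Proof. destruct b; simpl; lra. Qed.
Lemma ind_le1 b : ind b <= 1.
Proof. destruct b; simpl; lra. Qed.
Lemma ind_sq b : ind b * ind b = ind b.
Proof. destruct b; simpl; lra. Qed.

Fixpoint allb (n : nat) (b : nat -> bool) : bool :=
  match n with O => true | S n' => allb n' b && b n' end.

Lemma fprod_ind n b : fprod n (fun j => ind (b j)) = ind (allb n b).
Proof. induction n; simpl; auto. rewrite IHn. destruct (allb n b), (b n); simpl; lra. Qed.

Lemma allb_spec n b : allb n b = true <-> (forall j, (j < n)%nat -> b j = true).
Proof. induction n; simpl. - split; intros; auto; lia.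
  - rewrite andb_true_iff, IHn. split.
    + intros [H1 H2] j Hj. destruct (Nat.eq_dec j n); [subst; auto|apply H1; lia].
    + intros H; split; [intros; apply H; lia| apply H; lia]. Qed.

Lemma neg1_pow_even k : (-1) ^ (2 * k) = 1.
Proof. rewrite pow_mult. replace ((-1)^2) with 1 by (simpl; lra). apply pow1. Qed.

Lemma neg1_pow_sq k : (-1) ^ k * (-1) ^ k = 1.
Proof. rewrite <- pow_add. replace (k + k)%nat with (2 * k)%nat by lia. apply neg1_pow_even. Qed.

Lemma neg1_pow_par A B k : (A + B = 2 * k)%nat -> (-1) ^ A = (-1) ^ B.
Proof. intros H. rewrite <- (Rmult_1_r ((-1)^A)). rewrite <- (neg1_pow_sq B), <- Rmult_assoc, <- pow_add, H, neg1_pow_even. lra. Qed.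

Lemma fprod_one n : fprod n (fun _ => 1) = 1.
Proof. induction n; simpl; [auto|rewrite IHn; lra]. Qed.

Lemma fprod_single n f j0 : (j0 < n)%nat -> (forall j, (j < n)%nat -> j <> j0 -> f j = 1) -> fprod n f = f j0.
Proof. induction n; intros Hj H; [lia|]. simpl. destruct (Nat.eq_dec j0 n).
  - subst. rewrite (fprod_ext n f (fun _ => 1)). + rewrite fprod_one; lra.
    + intros; apply H; lia.
  - rewrite IHn by (try lia; intros; apply H; lia). rewrite (H n) by lia. lra. Qed.

Section Model.
Variables twoS L : nat.
Hypothesis H2S : (1 <= twoS)%nat.
Local Notation d := (ldim twoS).
Local Notation N := (hdim twoS L).
Local Notation m := (2 * L - 1)%nat.

Lemma d_gt1 : (1 < d)%nat.
Proof. unfold ldim; lia. Qed.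

Definition Eb (p a b : nat) : bool :=
  (a mod d ^ p =? b mod d ^ p)%nat
        && (a / d ^ (p + 2) =? b / d ^ (p + 2))%nat
        && (digit d a (S p) =? d - 1 - digit d a p)%nat
        && (digit d b (S p) =? d - 1 - digit d b p)%nat.

Definition Gs (a : nat) : R := fprod L (fun j => (-1) ^ (digit d a (2 * j))).
Definition Sind (a : nat) : R := fprod L (fun j => ind (digit d a (2 * j + 1) =? d - 1 - digit d a (2 * j))%nat).

Lemma Eb_spec p a b : Eb p a b = true <->
  ((forall q, q <> p -> q <> S p -> digit d a q = digit d b q) /\
   digit d a (S p) = (d - 1 - digit d a p)%nat /\ digit d b (S p) = (d - 1 - digit d b p)%nat).
Proof. unfold Eb. rewrite !andb_true_iff, !Nat.eqb_eq.
  rewrite (mod_eq_digits d d_gt1), (div_eq_digits d d_gt1). split.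
  - intros [[[H1 H2] H3] H4]. repeat split; auto. intros q Hq1 Hq2.
    destruct (Nat.lt_ge_cases q p); [apply H1; auto| apply H2; lia].
  - intros [H1 [H2 H3]]. repeat split; auto; intros; apply H1; lia. Qed.

Lemma Gs_sq a : Gs a * Gs a = 1.
Proof. unfold Gs. rewrite <- fprod_mult. rewrite (fprod_ext L _ (fun _ => 1)).
  - apply fprod_one.
  - intros; apply neg1_pow_sq. Qed.

Lemma Dvec_Sind a : Dvec twoS L a = Sind a * Gs a.
Proof. unfold Dvec, Sind, Gs. rewrite <- fprod_mult. reflexivity. Qed.

Lemma Psing_gauge p a b : (p < m)%nat ->
  INR d * Psing d p a b = ind (Eb p a b) * (Gs a * Gs b).
Proof. intros Hp. unfold Psing. fold (Eb p a b).
  assert (INR d <> 0) by (apply not_0_INR; unfold ldim; lia).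
  rewrite <- Rmult_assoc, Rinv_r, Rmult_1_l by auto.
  destruct (Eb p a b) eqn:E; unfold ind; [|lra]. apply Eb_spec in E. destruct E as [H1 [H2 H3]].
  rewrite !Rmult_1_l. unfold Gs. rewrite <- fprod_mult.
  assert (Hpar : forall j, (-1)^(digit d a (2*j)) * (-1)^(digit d b (2*j)) = (-1)^(digit d a (2*j) + digit d b (2*j))) by (intros; rewrite pow_add; auto).
  rewrite (fprod_ext L _ _ (fun j _ => Hpar j)).
  destruct (Nat.Even_or_Odd p) as [[k Hk]|[k Hk]].
  - rewrite (fprod_single L _ k).
    + subst. reflexivity.
    + lia.
    + intros j Hj Hjk. rewrite H1 by lia. apply (neg1_pow_par _ 0 (digit d b (2*j))). lia.
  - rewrite (fprod_single L _ (S k)).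
    + replace (2 * S k)%nat with (S p) by lia. rewrite H2, H3.
      generalize (digit_lt d d_gt1 a p) (digit_lt d d_gt1 b p). 
      generalize (digit d a p) (digit d b p). intros x y Hx Hy.
      apply neg1_pow_par with (d - 1)%nat. unfold ldim in *. lia.
    + lia.
    + intros j Hj Hjk. rewrite H1 by lia. apply (neg1_pow_par _ 0 (digit d b (2*j))). lia.
Qed.

Definition gen (p a b : nat) : R := if (p <? m)%nat then ind (Eb p a b) else ind (a =? b)%nat.

Definition Ar (r : nat) (a b : nat) : R := fsum (m + r) (fun p => gen p a b).

Lemma gen_nonneg p a b : 0 <= gen p a b.
Proof. unfold gen; destruct (p <? m)%nat; apply ind_nonneg. Qed.

Lemma Ham_gauge a b : Ham twoS L a b = - (Gs a * Gs b) * Ar 0 a b.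
Proof. unfold Ham, Ar. rewrite Nat.add_0_r.
  transitivity (- fsum m (fun p => INR d * Psing d p a b)). { rewrite fsum_scal_l; ring. }
  rewrite (fsum_ext m _ (fun p => ind (Eb p a b) * (Gs a * Gs b))) by (intros; apply Psing_gauge; auto).
  rewrite fsum_scal_r. rewrite (fsum_ext m (fun p => gen p a b) (fun p => ind (Eb p a b))). { ring. }
  intros p Hp. unfold gen. replace (p <? m)%nat with true by (symmetry; apply Nat.ltb_lt; auto). auto. Qed.

End Model.

End P3.
Import P3.

Module P4.
Open Scope R_scope.

Section Words.
Variables (N K : nat) (g : nat -> nat -> nat -> R).

Fixpoint Wd (w : list nat) (a b : nat) : R :=
  match w with
  | nil => ind (a =? b)%nat
  | p :: w' => fsum N (fun l => Wd w' a l * g p l b)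
  end.

Fixpoint wsum (k : nat) (F : list nat -> R) : R :=
  match k with
  | O => F nil
  | S k' => fsum K (fun p => wsum k' (fun w => F (p :: w)))
  end.

Lemma wsum_ext k F G : (forall w, F w = G w) -> wsum k F = wsum k G.
Proof. revert F G; induction k; intros F G H; simpl; auto. apply fsum_ext; intros; apply IHk; auto. Qed.

Lemma wsum_fsum k n F : wsum k (fun w => fsum n (fun l => F w l)) = fsum n (fun l => wsum k (fun w => F w l)).
Proof. revert F; induction k; intros F; simpl; auto.
  rewrite (fsum_ext K _ (fun p => fsum n (fun l => wsum k (fun w => F (p :: w) l)))).
  - apply fsum_swap.
  - intros; apply (IHk (fun w l => F (i :: w) l)). Qed.

Lemma wsum_scal_r k c F : wsum k (fun w => F w * c) = wsum k F * c.
Proof. revert F; induction k; intros F; simpl; auto.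
  rewrite <- fsum_scal_r. apply fsum_ext; intros; apply (IHk (fun w => F (i :: w))). Qed.

Lemma wsum_scal_l k c F : wsum k (fun w => c * F w) = c * wsum k F.
Proof. revert F; induction k; intros F; simpl; auto.
  rewrite <- fsum_scal_l. apply fsum_ext; intros; apply (IHk (fun w => F (i :: w))). Qed.

Lemma wsum_le k F G : (forall w, F w <= G w) -> wsum k F <= wsum k G.
Proof. revert F G; induction k; intros F G H; simpl; auto. apply fsum_le; intros; apply IHk; auto. Qed.

Lemma wsum_nonneg k F : (forall w, 0 <= F w) -> 0 <= wsum k F.
Proof. revert F; induction k; intros F H; simpl; auto. apply fsum_nonneg; intros; apply IHk; auto. Qed.

Hypothesis g_nonneg : forall p a b, 0 <= g p a b.

Lemma Wd_nonneg w a b : 0 <= Wd w a b.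
Proof. revert b; induction w; intros b; simpl; [destruct (a =? b)%nat; simpl; lra|].
  apply fsum_nonneg; intros. apply Rmult_le_pos; auto. Qed.

End Words.

Lemma matpow_wsum N K g k a b :
  matpow N (fun x y => fsum K (fun p => g p x y)) k a b = wsum K k (fun w => Wd N g w a b).
Proof. revert b; induction k; intros b; simpl; auto.
  rewrite (fsum_ext N _ (fun l => wsum K k (fun w => Wd N g w a l) * fsum K (fun p => g p l b))) by (intros; rewrite IHk; auto).
  rewrite (fsum_ext K _ (fun p => fsum N (fun l => wsum K k (fun w => Wd N g w a l) * g p l b))).
  - rewrite fsum_swap. apply fsum_ext. intros. rewrite fsum_scal_l. auto.
  - intros p Hp. simpl. rewrite wsum_fsum. apply fsum_ext. intros. apply wsum_scal_r. Qed.

End P4.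
Import P4.

Module P5.
Local Open Scope nat_scope.

Lemma mod_add_cancel d x y k : (0 < d)%nat -> (x < d)%nat -> (y < d)%nat -> ((x + k) mod d = (y + k) mod d)%nat -> x = y.
Proof. intros Hd Hx Hy H.
  assert (E: forall z, (z < d)%nat -> z = (((z + k) mod d + (d - 1) * k) mod d)%nat).
  { intros z Hz. rewrite Nat.Div0.add_mod_idemp_l. replace (z + k + (d - 1) * k)%nat with (z + k * d)%nat.
    - rewrite Nat.Div0.mod_add, Nat.mod_small; auto.
    - destruct d; [lia|]. simpl. rewrite Nat.sub_0_r. lia. }
  rewrite (E x Hx), (E y Hy), H. reflexivity. Qed.

Lemma msum d u v : (0 < d)%nat -> ((u + v) mod d = d - 1)%nat -> (v mod d = d - 1 - u mod d)%nat.
Proof. intros Hd H. rewrite Nat.Div0.add_mod in H.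
  generalize (Nat.mod_upper_bound u d ltac:(lia)) (Nat.mod_upper_bound v d ltac:(lia)). revert H.
  generalize (u mod d) (v mod d). intros ru rv H Hu Hv.
  generalize (Nat.div_mod_eq (ru + rv) d). rewrite H.
  assert (Hq : ((ru + rv) / d < 2)%nat) by (apply Nat.Div0.div_lt_upper_bound; lia).
  destruct ((ru + rv) / d) as [|[|q]]; intros; nia.
Qed.

Section Phi.
Variables twoS L : nat.
Hypothesis H2S : (1 <= twoS)%nat.
Local Notation d := (ldim twoS).
Local Notation N := (hdim twoS L).
Local Notation m := (2 * L - 1)%nat.
Local Notation n := (2 * L)%nat.

Let Hd := d_gt1 twoS H2S.

Definition cst (q : nat) : nat := if Nat.even q then 0%nat else (d - 1)%nat.

Lemma cst_lt q : (cst q < d)%nat.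
Proof. unfold cst; destruct (Nat.even q); lia. Qed.

Definition phf (a' a : nat) (q : nat) : nat := ((digit d a q + d - digit d a' q + cst q) mod d)%nat.
Definition phi (a' a : nat) : nat := enc d n (phf a' a).

Lemma phf_lt a' a q : (phf a' a q < d)%nat.
Proof. unfold phf; apply Nat.mod_upper_bound; lia. Qed.

Lemma phi_lt a' a : (phi a' a < N)%nat.
Proof. unfold phi, hdim. apply enc_lt; auto. intros; apply phf_lt. Qed.

Lemma digit_phi a' a q : (q < n)%nat -> digit d (phi a' a) q = phf a' a q.
Proof. intros; unfold phi; apply digit_enc; auto. intros; apply phf_lt. Qed.

Lemma digit_phi_big a' a q : (n <= q)%nat -> digit d (phi a' a) q = 0%nat.
Proof. intros; unfold phi; apply digit_enc_big; auto. intros; apply phf_lt. Qed.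

Lemma digit_N a q : (a < N)%nat -> (n <= q)%nat -> digit d a q = 0%nat.
Proof. intros; apply digit_big with n; auto. Qed.

Lemma phi_inj a' a b : (a < N)%nat -> (b < N)%nat -> phi a' a = phi a' b -> a = b.
Proof. intros Ha Hb H. apply (eq_digits d Hd). intros q. destruct (Nat.lt_ge_cases q n).
  - assert (E: phf a' a q = phf a' b q) by (rewrite <- !digit_phi, H; auto).
    unfold phf in E. generalize (digit_lt d Hd a' q). intros.
    replace (digit d a q + d - digit d a' q + cst q)%nat with (digit d a q + (d - digit d a' q + cst q))%nat in E by lia.
    replace (digit d b q + d - digit d a' q + cst q)%nat with (digit d b q + (d - digit d a' q + cst q))%nat in E by lia.
    apply mod_add_cancel in E; auto; try lia; apply digit_lt; auto.
  - rewrite !digit_N; auto. Qed.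

Lemma mod_3d d0 : (0 < d0)%nat -> ((3 * d0 - 1) mod d0 = d0 - 1)%nat.
Proof. intros. replace (3 * d0 - 1)%nat with (d0 - 1 + 2 * d0)%nat by lia.
  rewrite Nat.Div0.mod_add. apply Nat.mod_small. lia. Qed.

Lemma phf_pair a' a p : (digit d a (S p) = d - 1 - digit d a p)%nat -> (digit d a' (S p) = d - 1 - digit d a' p)%nat ->
  phf a' a (S p) = (d - 1 - phf a' a p)%nat.
Proof. intros H1 H2. unfold phf. apply msum; [lia|]. rewrite H1, H2.
  generalize (digit_lt d Hd a p) (digit_lt d Hd a' p). intros.
  assert (cst p + cst (S p) = d - 1)%nat.
  { unfold cst. rewrite Nat.even_succ, <- Nat.negb_even. destruct (Nat.even p); simpl; lia. }
  replace (digit d a p + d - digit d a' p + cst p + (d - 1 - digit d a p + d - (d - 1 - digit d a' p) + cst (S p)))%nat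
    with (3 * d - 1)%nat by lia. apply mod_3d; lia. Qed.

Lemma Eb_phi p a' b' a b : (p < m)%nat -> (a < N)%nat -> (b < N)%nat -> (a' < N)%nat -> (b' < N)%nat ->
  Eb twoS p a' b' = true -> Eb twoS p a b = true -> Eb twoS p (phi a' a) (phi b' b) = true.
Proof. intros Hp Ha Hb Ha' Hb' E1 E2. apply (Eb_spec twoS H2S) in E1, E2.
  destruct E1 as [F1 [F2 F3]]. destruct E2 as [G1 [G2 G3]]. apply (Eb_spec twoS H2S). repeat split.
  - intros q Hq1 Hq2. destruct (Nat.lt_ge_cases q n).
    + rewrite !digit_phi by auto. unfold phf. rewrite G1, F1 by auto. reflexivity.
    + rewrite !digit_phi_big; auto.
  - rewrite !digit_phi by lia. apply phf_pair; auto.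
  - rewrite !digit_phi by lia. apply phf_pair; auto.
Qed.

Definition Cb (s a j : nat) : bool := ((digit d a (2 * j) + digit d a (2 * j + 1)) mod d =? digit d s j)%nat.
Definition Cind (s a : nat) : R := ind (allb L (Cb s a)).
Definition Sb (a j : nat) : bool := (digit d a (2 * j + 1) =? d - 1 - digit d a (2 * j))%nat.

Lemma Sind_allb a : Sind twoS L a = ind (allb L (Sb a)).
Proof. unfold Sind. rewrite fprod_ind. reflexivity. Qed.

Lemma Sind_phi s a' a : allb L (Cb s a') = true -> allb L (Cb s a) = true -> allb L (Sb (phi a' a)) = true.
Proof. rewrite !allb_spec. intros H1 H2 j Hj. specialize (H1 j Hj); specialize (H2 j Hj).
  unfold Cb in *. unfold Sb. apply Nat.eqb_eq in H1, H2. apply Nat.eqb_eq.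
  rewrite !digit_phi by lia. unfold phf.
  assert (cst (2 * j) = 0)%nat by (unfold cst; rewrite Nat.even_mul; auto).
  assert (cst (2 * j + 1) = d - 1)%nat by (unfold cst; rewrite Nat.add_1_r, Nat.even_succ, Nat.odd_mul; auto).
  rewrite H, H0. apply msum; [lia|].
  generalize (digit_lt d Hd a (2*j)) (digit_lt d Hd a (2*j+1)) (digit_lt d Hd a' (2*j)) (digit_lt d Hd a' (2*j+1)).
  rewrite <- H1 in H2.
  generalize (Nat.div_mod_eq (digit d a (2 * j) + digit d a (2 * j + 1)) d).
  generalize (Nat.div_mod_eq (digit d a' (2 * j) + digit d a' (2 * j + 1)) d).
  rewrite H2. generalize ((digit d a' (2 * j) + digit d a' (2 * j + 1)) mod d).
  generalize ((digit d a (2 * j) + digit d a (2 * j + 1)) / d) ((digit d a' (2 * j) + digit d a' (2 * j + 1)) / d).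
  generalize (digit d a (2*j)) (digit d a (2*j+1)) (digit d a' (2*j)) (digit d a' (2*j+1)).
  intros x y x' y' k2 k1 r E1 E2 Hx Hy Hx' Hy'.
  assert (k1 <= 1)%nat by (destruct k1 as [|[|k1]]; nia).
  assert (k2 <= 1)%nat by (destruct k2 as [|[|k2]]; nia).
  destruct k1 as [|[|]]; destruct k2 as [|[|]]; try lia;
  (first [ replace (x + d - x' + 0 + (y + d - y' + (d - 1)))%nat with (d - 1 + 1 * d)%nat by lia
         | replace (x + d - x' + 0 + (y + d - y' + (d - 1)))%nat with (d - 1 + 2 * d)%nat by lia
         | replace (x + d - x' + 0 + (y + d - y' + (d - 1)))%nat with (d - 1 + 3 * d)%nat by lia ]);
    rewrite Nat.Div0.mod_add, Nat.mod_small; lia.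
Qed.

Definition sclass (a : nat) : nat := enc d L (fun j => ((digit d a (2 * j) + digit d a (2 * j + 1)) mod d)%nat).

Lemma sclass_lt a : (sclass a < d ^ L)%nat.
Proof. apply enc_lt; auto. intros; apply Nat.mod_upper_bound; lia. Qed.

Lemma sclass_spec a : allb L (Cb (sclass a) a) = true.
Proof. apply allb_spec. intros j Hj. unfold Cb, sclass. rewrite digit_enc; auto.
  - apply Nat.eqb_refl.
  - intros; apply Nat.mod_upper_bound; lia. Qed.

End Phi.

End P5.
Import P5.

Module P6.
Local Open Scope R_scope.

Lemma pos_mult x y : 0 <= x -> 0 <= y -> 0 < x * y -> 0 < x /\ 0 < y.
Proof. intros Hx Hy H. destruct (Rle_lt_or_eq_dec 0 x Hx) as [Hx'|Hx']; [|subst; lra].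
  destruct (Rle_lt_or_eq_dec 0 y Hy) as [Hy'|Hy']; [|subst; lra]. auto. Qed.

Lemma ind_pos b : 0 < ind b -> b = true.
Proof. destruct b; simpl; auto; lra. Qed.

Section Cmp.
Variables twoS L : nat.
Hypothesis H2S : (1 <= twoS)%nat.
Local Notation d := (ldim twoS).
Local Notation N := (hdim twoS L).
Local Notation m := (2 * L - 1)%nat.
Local Notation gen := (gen twoS L).
Local Notation phi := (phi twoS L).
Local Notation W := (Wd N gen).

Lemma gen_step p a' b' a b : (a < N)%nat -> (b < N)%nat -> (a' < N)%nat -> (b' < N)%nat ->
  0 < gen p a' b' -> gen p a b <= gen p (phi a' a) (phi b' b).
Proof. intros Ha Hb Ha' Hb' H. unfold P3.gen in *. destruct (p <? 2 * L - 1)%nat eqn:Ep.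
  - apply ind_pos in H. destruct (Eb twoS p a b) eqn:E; [|simpl; apply ind_nonneg].
    rewrite (Eb_phi twoS L H2S p a' b' a b); auto; [simpl; lra|]. apply Nat.ltb_lt; auto.
  - apply ind_pos in H. apply Nat.eqb_eq in H. subst. destruct (a =? b)%nat eqn:E; [|simpl; apply ind_nonneg].
    apply Nat.eqb_eq in E; subst. rewrite Nat.eqb_refl. lra. Qed.

Lemma W_nonneg w a b : 0 <= W w a b.
Proof. apply Wd_nonneg. intros; apply gen_nonneg. Qed.

Lemma lemmaK w : forall a' b', (a' < N)%nat -> (b' < N)%nat -> 0 < W w a' b' ->
  forall a b, (a < N)%nat -> (b < N)%nat -> W w a b <= W w (phi a' a) (phi b' b).
Proof. induction w as [|p w IH]; intros a' b' Ha' Hb' Hpos a b Ha Hb; simpl in *.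
  - apply ind_pos, Nat.eqb_eq in Hpos. subst. destruct (a =? b)%nat eqn:E; [|simpl; apply ind_nonneg].
    apply Nat.eqb_eq in E; subst. rewrite Nat.eqb_refl. lra.
  - apply fsum_pos_ex in Hpos. destruct Hpos as [l' [Hl' Hpos]].
    apply pos_mult in Hpos; [|apply W_nonneg|apply gen_nonneg]. destruct Hpos as [H1 H2].
    apply Rle_trans with (fsum N (fun l => W w (phi a' a) (phi l' l) * gen p (phi l' l) (phi b' b))).
    + apply fsum_le. intros l Hl. apply Rmult_le_compat; try apply W_nonneg; try apply gen_nonneg.
      * apply IH; auto.
      * apply gen_step; auto.
    + apply (fsum_inj_le N (phi l') (fun l => W w (phi a' a) l * gen p l (phi b' b))).
      * intros; apply phi_lt; auto.
      * intros; eapply phi_inj; eauto.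
      * intros; apply Rmult_le_pos; [apply W_nonneg|apply gen_nonneg].
Qed.

Definition QS w := fsum N (fun a => fsum N (fun b => Sind twoS L a * W w a b * Sind twoS L b)).
Definition QC s w := fsum N (fun a => fsum N (fun b => Cind twoS L s a * W w a b * Cind twoS L s b)).

Lemma Sind_nonneg a : 0 <= Sind twoS L a.
Proof. rewrite Sind_allb. apply ind_nonneg. Qed.
Lemma Cind_nonneg s a : 0 <= Cind twoS L s a.
Proof. apply ind_nonneg. Qed.

Lemma QC_le s w : QC s w <= QS w.
Proof. unfold QC, QS.
  destruct (classic (exists a' b', (a' < N)%nat /\ (b' < N)%nat /\ allb L (Cb twoS s a') = true /\
     allb L (Cb twoS s b') = true /\ 0 < W w a' b')) as [[a' [b' [Ha' [Hb' [Ca [Cb' Hp]]]]]]|Hn].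
  - apply Rle_trans with (fsum N (fun a => fsum N (fun b => Sind twoS L (phi a' a) * W w (phi a' a) (phi b' b) * Sind twoS L (phi b' b)))).
    + apply fsum_le; intros a Ha; apply fsum_le; intros b Hb. unfold Cind.
      destruct (allb L (Cb twoS s a)) eqn:E1; [|simpl; rewrite !Rmult_0_l; apply Rmult_le_pos; [apply Rmult_le_pos|]; try apply Sind_nonneg; apply W_nonneg].
      destruct (allb L (Cb twoS s b)) eqn:E2; [|simpl; rewrite !Rmult_0_r; apply Rmult_le_pos; [apply Rmult_le_pos|]; try apply Sind_nonneg; apply W_nonneg].
      rewrite !Sind_allb, (Sind_phi twoS L H2S s a' a), (Sind_phi twoS L H2S s b' b) by auto. simpl.
      rewrite !Rmult_1_l, !Rmult_1_r. apply lemmaK; auto.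
    + apply Rle_trans with (fsum N (fun a => fsum N (fun b => Sind twoS L (phi a' a) * W w (phi a' a) b * Sind twoS L b))).
      * apply fsum_le; intros a Ha.
        apply (fsum_inj_le N (phi b') (fun b => Sind twoS L (phi a' a) * W w (phi a' a) b * Sind twoS L b)).
        -- intros; apply phi_lt; auto.
        -- intros; eapply phi_inj; eauto.
        -- intros; repeat apply Rmult_le_pos; try apply Sind_nonneg; apply W_nonneg.
      * apply (fsum_inj_le N (phi a') (fun a => fsum N (fun b => Sind twoS L a * W w a b * Sind twoS L b))).
        -- intros; apply phi_lt; auto.
        -- intros; eapply phi_inj; eauto.
        -- intros; apply fsum_nonneg; intros; repeat apply Rmult_le_pos; try apply Sind_nonneg; apply W_nonneg.
  - apply Rle_trans with 0.
    + apply Rle_trans with (fsum N (fun _ => fsum N (fun _ => 0))).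
      * apply fsum_le; intros a Ha; apply fsum_le; intros b Hb. unfold Cind.
        destruct (allb L (Cb twoS s a)) eqn:E1; [|simpl; lra].
        destruct (allb L (Cb twoS s b)) eqn:E2; [|simpl; lra].
        simpl. rewrite Rmult_1_l, Rmult_1_r. destruct (Rle_dec (W w a b) 0); auto.
        exfalso; apply Hn. exists a, b. repeat split; auto; lra.
      * rewrite fsum_zero; [lra|]. intros; apply fsum_zero; auto.
    + apply fsum_nonneg; intros; apply fsum_nonneg; intros; repeat apply Rmult_le_pos; try apply Sind_nonneg; apply W_nonneg.
Qed.

Theorem trace_ineq r k :
  fsum N (fun a => matpow N (Ar twoS L r) k a a) <=
  INR (d ^ L) * fsum N (fun a => fsum N (fun b => Sind twoS L a * matpow N (Ar twoS L r) k a b * Sind twoS L b)).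
Proof.
  set (K := (m + r)%nat).
  assert (HT : forall a b, matpow N (Ar twoS L r) k a b = wsum K k (fun w => W w a b)) by (intros; apply matpow_wsum).
  assert (HTn : forall a b, 0 <= matpow N (Ar twoS L r) k a b) by (intros; rewrite HT; apply wsum_nonneg; intros; apply W_nonneg).
  set (T := matpow N (Ar twoS L r) k) in *.
  apply Rle_trans with (fsum (d ^ L) (fun s => fsum N (fun a => Cind twoS L s a * T a a))).
  { rewrite fsum_swap. apply fsum_le. intros a Ha. rewrite fsum_scal_r.
    rewrite <- (Rmult_1_l (T a a)) at 1. apply Rmult_le_compat_r; auto.
    apply Rle_trans with (Cind twoS L (sclass twoS L a) a).
    - unfold Cind. rewrite sclass_spec; auto. simpl; lra.
    - apply (fsum_single_le (d ^ L) (fun s => Cind twoS L s a)); [intros; apply Cind_nonneg|]. apply sclass_lt; auto. }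
  apply Rle_trans with (fsum (d ^ L) (fun s => fsum N (fun a => fsum N (fun b => Cind twoS L s a * T a b * Cind twoS L s b)))).
  { apply fsum_le; intros s Hs; apply fsum_le; intros a Ha.
    apply Rle_trans with (Cind twoS L s a * T a a * Cind twoS L s a).
    - unfold Cind. rewrite (Rmult_comm (ind _ * T a a)), <- Rmult_assoc, ind_sq. lra.
    - apply (fsum_single_le N (fun b => Cind twoS L s a * T a b * Cind twoS L s b)); auto.
      intros; repeat apply Rmult_le_pos; auto; apply Cind_nonneg. }
  assert (Hexp : forall u v : nat -> R, fsum N (fun a => fsum N (fun b => u a * T a b * v b)) =
     wsum K k (fun w => fsum N (fun a => fsum N (fun b => u a * W w a b * v b)))).
  { intros u v. rewrite wsum_fsum. apply fsum_ext; intros a Ha. rewrite wsum_fsum. apply fsum_ext; intros b Hb.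
    rewrite HT, wsum_scal_r, wsum_scal_l. reflexivity. }
  apply Rle_trans with (fsum (d ^ L) (fun _ => fsum N (fun a => fsum N (fun b => Sind twoS L a * T a b * Sind twoS L b)))).
  - apply fsum_le; intros s Hs. rewrite !Hexp. apply wsum_le. intros w. apply QC_le.
  - rewrite fsum_const. lra.
Qed.
End Cmp.

End P6.
Import P6.

Module P7.
Local Open Scope R_scope.

Lemma Un_cv_ext u v l : (forall n, u n = v n) -> Un_cv u l -> Un_cv v l.
Proof. intros H Hu eps He. destruct (Hu eps He) as [M HM]. exists M. intros n Hn. rewrite <- H. auto. Qed.

Lemma Un_cv_fsum n u l : (forall i, (i < n)%nat -> Un_cv (u i) (l i)) ->
  Un_cv (fun k => fsum n (fun i => u i k)) (fsum n l).
Proof. induction n; intros H; simpl.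
  - intros eps He. exists 0%nat. intros. unfold Rdist. rewrite Rminus_0_r, Rabs_R0. auto.
  - apply CV_plus; [apply IHn; intros; apply H; lia| apply H; lia]. Qed.

Lemma Un_cv_scal c u l : Un_cv u l -> Un_cv (fun k => c * u k) (c * l).
Proof. intros H. apply CV_mult; auto. intros eps He. exists 0%nat. intros. unfold Rdist. rewrite Rminus_diag, Rabs_R0. auto. Qed.

Lemma Un_cv_scal_r c u l : Un_cv u l -> Un_cv (fun k => u k * c) (l * c).
Proof. intros H. apply (Un_cv_ext (fun k => c * u k)); [intros; ring|]. rewrite Rmult_comm. apply Un_cv_scal; auto. Qed.

Lemma fsum_sum_f n N f : fsum N (fun a => sum_f_R0 (fun k => f a k) n) = sum_f_R0 (fun k => fsum N (fun a => f a k)) n.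
Proof. induction n; simpl; auto. rewrite fsum_plus, IHn. auto. Qed.

Lemma sum_f_scal n c f : c * sum_f_R0 f n = sum_f_R0 (fun k => c * f k) n.
Proof. induction n; simpl; auto. rewrite <- IHn. ring. Qed.

Section Part1.
Variables twoS L : nat.
Hypothesis H2S : (1 <= twoS)%nat.
Variable beta : R.
Local Notation d := (ldim twoS).
Local Notation N := (hdim twoS L).
Local Notation M := (fun a b => - beta * Ham twoS L a b).
Local Notation T := (matpow N (Ar twoS L 0)).

Lemma matpow_gauge k a b : matpow N M k a b = beta ^ k * (Gs twoS L a * Gs twoS L b) * T k a b.
Proof. revert b; induction k; intros b; simpl.
  - destruct (a =? b)%nat eqn:E; simpl; [|ring]. apply Nat.eqb_eq in E; subst. rewrite Gs_sq by auto. ring.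
  - rewrite <- fsum_scal_l. apply fsum_ext; intros l Hl. rewrite IHk, Ham_gauge by auto.
    replace (beta ^ k * (Gs twoS L a * Gs twoS L l) * T k a l * (- beta * (- (Gs twoS L l * Gs twoS L b) * Ar twoS L 0 l b)))
      with (beta * beta ^ k * (Gs twoS L a * Gs twoS L b) * (T k a l * Ar twoS L 0 l b) * (Gs twoS L l * Gs twoS L l)) by ring.
    rewrite Gs_sq by auto. ring. Qed.

Lemma part1 E : 0 < beta -> is_mexp N M E ->
  fsum N (fun a => fsum N (fun b => Dvec twoS L a * E a b * Dvec twoS L b))
    / fsum N (fun a => E a a) >= / (INR d ^ L).
Proof. intros Hb HE.
  set (num := fun k => fsum N (fun a => fsum N (fun b => Sind twoS L a * T k a b * Sind twoS L b))).
  set (den := fun k => fsum N (fun a => T k a a)).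
  set (c := fun k => beta ^ k / INR (fact k)).
  assert (Hc : forall k, 0 <= c k).
  { intros k. unfold c. apply Rmult_le_pos; [apply pow_le; lra|]. apply Rlt_le, Rinv_0_lt_compat, lt_0_INR, lt_O_fact. }
  assert (Hnum : Un_cv (fun n => sum_f_R0 (fun k => c k * num k) n)
             (fsum N (fun a => fsum N (fun b => Dvec twoS L a * E a b * Dvec twoS L b)))).
  { apply (Un_cv_ext (fun n => fsum N (fun a => fsum N (fun b => Dvec twoS L a * sum_f_R0 (fun k => matpow N M k a b / INR (fact k)) n * Dvec twoS L b)))).
    - intros n. rewrite (fsum_ext N _ (fun a => sum_f_R0 (fun k => fsum N (fun b => Dvec twoS L a * (matpow N M k a b / INR (fact k)) * Dvec twoS L b)) n)).
      + rewrite fsum_sum_f. apply sum_eq. intros k Hk. unfold c, num. rewrite <- fsum_scal_l. apply fsum_ext; intros a Ha.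
        rewrite <- fsum_scal_l. apply fsum_ext; intros b Hb'. rewrite matpow_gauge, !Dvec_Sind.
        unfold Rdiv. 
        replace (Sind twoS L a * Gs twoS L a * (beta ^ k * (Gs twoS L a * Gs twoS L b) * T k a b * / INR (fact k)) * (Sind twoS L b * Gs twoS L b))
          with (beta ^ k * / INR (fact k) * (Sind twoS L a * T k a b * Sind twoS L b) * (Gs twoS L a * Gs twoS L a) * (Gs twoS L b * Gs twoS L b)) by ring.
        rewrite !Gs_sq by auto. ring.
      + intros a Ha. rewrite <- fsum_sum_f. apply fsum_ext. intros b Hb'.
        rewrite sum_f_scal. rewrite Rmult_comm, sum_f_scal. apply sum_eq. intros; ring.
    - apply Un_cv_fsum. intros a Ha. apply Un_cv_fsum. intros b Hb'. apply Un_cv_scal_r, Un_cv_scal. apply HE; auto. }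
  assert (Hden : Un_cv (fun n => sum_f_R0 (fun k => c k * den k) n) (fsum N (fun a => E a a))).
  { apply (Un_cv_ext (fun n => fsum N (fun a => sum_f_R0 (fun k => matpow N M k a a / INR (fact k)) n))).
    - intros n. rewrite fsum_sum_f. apply sum_eq. intros k Hk. unfold c, den. rewrite <- fsum_scal_l. apply fsum_ext; intros a Ha.
      rewrite matpow_gauge, Gs_sq by auto. unfold Rdiv. ring.
    - apply Un_cv_fsum. intros a Ha. apply HE; auto. }
  assert (Hle : fsum N (fun a => E a a) <= INR (d ^ L) * fsum N (fun a => fsum N (fun b => Dvec twoS L a * E a b * Dvec twoS L b))).
  { apply (Rle_cv_lim (Un := fun n => sum_f_R0 (fun k => c k * den k) n) (Vn := fun n => INR (d ^ L) * sum_f_R0 (fun k => c k * num k) n)); auto.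
    - intros n. rewrite sum_f_scal. apply sum_Rle. intros k Hk.
      replace (INR (d ^ L) * (c k * num k)) with (c k * (INR (d ^ L) * num k)) by ring.
      apply Rmult_le_compat_l; auto. apply trace_ineq; auto.
    - apply Un_cv_scal; auto. }
  assert (Hpos : 0 < fsum N (fun a => E a a)).
  { apply Rlt_le_trans with (sum_f_R0 (fun k => c k * den k) 0).
    - simpl. unfold c, den. simpl. rewrite (fsum_ext N _ (fun _ => 1)).
      + rewrite fsum_const. unfold hdim. rewrite pow_INR. 
        assert (0 < INR d) by (apply lt_0_INR; unfold ldim; lia).
        assert (0 < INR d ^ (2 * L)) by (apply pow_lt; auto). field_simplify; lra.
      + intros a Ha. rewrite Nat.eqb_refl. reflexivity.
    - apply sum_incr; auto. intros k. apply Rmult_le_pos; auto. unfold den. apply fsum_nonneg. intros a Ha.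
      rewrite (matpow_wsum N (2 * L - 1 + 0)%nat (P3.gen twoS L)). apply wsum_nonneg. intros; apply W_nonneg. }
  rewrite pow_INR in Hle. apply Rle_ge.
  assert (0 < INR d ^ L) by (apply pow_lt, lt_0_INR; unfold ldim; lia).
  unfold Rdiv. apply (Rmult_le_reg_l (INR d ^ L)); auto. rewrite Rinv_r by lra.
  apply (Rmult_le_reg_r (fsum N (fun a => E a a))); auto.
  rewrite Rmult_1_l. rewrite Rmult_assoc, Rmult_assoc, Rinv_l, Rmult_1_r by lra. lra.
Qed.
End Part1.

End P7.
Import P7.

Module P8.
Local Open Scope R_scope.

Definition dot (N : nat) (x y : nat -> R) : R := fsum N (fun i => x i * y i).
Definition nrm2 (N : nat) (x : nat -> R) : R := dot N x x.
Definition app (N : nat) (K : nat -> nat -> R) (x : nat -> R) : nat -> R := fun a => fsum N (fun b => K a b * x b).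

Lemma nrm2_nonneg N x : 0 <= nrm2 N x.
Proof. apply fsum_nonneg; intros; nra. Qed.

Lemma nrm2_zero N x : nrm2 N x = 0 -> forall i, (i < N)%nat -> x i = 0.
Proof. intros H i Hi. assert (x i * x i <= nrm2 N x) by (apply (fsum_single_le N (fun i => x i * x i)); auto; intros; nra). nra. Qed.

Lemma nrm2_pos N x : (exists i, (i < N)%nat /\ x i <> 0) -> 0 < nrm2 N x.
Proof. intros [i [Hi Hx]]. destruct (Rle_lt_or_eq_dec _ _ (nrm2_nonneg N x)) as [|E]; auto.
  exfalso. apply Hx. apply nrm2_zero with N; auto. Qed.

Lemma dot_ext N x y x' y' : (forall i, (i < N)%nat -> x i = x' i) -> (forall i, (i < N)%nat -> y i = y' i) -> dot N x y = dot N x' y'.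
Proof. intros; unfold dot; apply fsum_ext; intros; rewrite H, H0; auto. Qed.

Lemma dot_sym N x y : dot N x y = dot N y x.
Proof. unfold dot; apply fsum_ext; intros; ring. Qed.

Lemma dot_comb N x y z t : dot N x (fun i => y i + t * z i) = dot N x y + t * dot N x z.
Proof. unfold dot. rewrite <- fsum_scal_l, <- fsum_plus. apply fsum_ext; intros; ring. Qed.

Lemma dot_scal N x y c : dot N x (fun i => c * y i) = c * dot N x y.
Proof. unfold dot. rewrite <- fsum_scal_l. apply fsum_ext; intros; ring. Qed.

Lemma dot_scal_l N x y c : dot N (fun i => c * x i) y = c * dot N x y.
Proof. unfold dot. rewrite <- fsum_scal_l. apply fsum_ext; intros; ring. Qed.

Lemma nrm2_comb N x y t : nrm2 N (fun i => x i + t * y i) = nrm2 N x + 2 * t * dot N x y + t ^ 2 * nrm2 N y.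
Proof. unfold nrm2, dot. rewrite <- !fsum_scal_l, <- !fsum_plus. apply fsum_ext; intros; ring. Qed.

Lemma nrm2_scal N x c : nrm2 N (fun i => c * x i) = c ^ 2 * nrm2 N x.
Proof. unfold nrm2, dot. rewrite <- fsum_scal_l. apply fsum_ext; intros; ring. Qed.

Lemma app_comb N K x y t a : app N K (fun i => x i + t * y i) a = app N K x a + t * app N K y a.
Proof. unfold app. rewrite <- fsum_scal_l, <- fsum_plus. apply fsum_ext; intros; ring. Qed.

Lemma app_scal N K x c a : app N K (fun i => c * x i) a = c * app N K x a.
Proof. unfold app. rewrite <- fsum_scal_l. apply fsum_ext; intros; ring. Qed.

Lemma app_ext N K x y a : (forall i, (i < N)%nat -> x i = y i) -> app N K x a = app N K y a.
Proof. intros; unfold app; apply fsum_ext; intros; rewrite H; auto. Qed.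

Lemma nrm2_ext N x y : (forall i, (i < N)%nat -> x i = y i) -> nrm2 N x = nrm2 N y.
Proof. intros; apply dot_ext; auto. Qed.

Lemma cauchy_schwarz N x y : (dot N x y) ^ 2 <= nrm2 N x * nrm2 N y.
Proof. destruct (Rle_lt_or_eq_dec _ _ (nrm2_nonneg N x)) as [Hp|E].
  - assert (H := nrm2_nonneg N (fun i => dot N x y / nrm2 N x * x i + (-1) * y i)).
    rewrite nrm2_comb, nrm2_scal, dot_scal_l in H. unfold nrm2 in *.
    set (a := dot N x x) in *. set (b := dot N x y) in *. set (c := dot N y y) in *.
    assert (0 <= - b ^ 2 / a + c).
    { replace (- b ^ 2 / a + c) with ((b / a) ^ 2 * a + 2 * (-1) * (b / a * b) + (-1) ^ 2 * c) by (field; lra). lra. }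
    assert (b ^ 2 / a <= c) by lra.
    apply (Rmult_le_compat_l a) in H1; [|lra]. replace (a * (b ^ 2 / a)) with (b ^ 2) in H1 by (field; lra). lra.
  - assert (dot N x y = 0). { unfold dot. apply fsum_zero. intros. rewrite (nrm2_zero N x) by auto. ring. }
    rewrite H, <- E. simpl. lra. Qed.

Lemma fsum_ind_r N f b : (b < N)%nat -> fsum N (fun l => f l * ind (l =? b)%nat) = f b.
Proof. intros Hb. rewrite <- (fsum_delta N b f Hb). apply fsum_ext; intros l Hl.
  destruct (Nat.eq_dec l b); [subst; rewrite Nat.eqb_refl; simpl; ring|].
  apply Nat.eqb_neq in n. rewrite n. simpl. ring. Qed.

Lemma fsum_ind_l N f a : (a < N)%nat -> fsum N (fun l => ind (a =? l)%nat * f l) = f a.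
Proof. intros Ha. rewrite <- (fsum_ind_r N f a Ha). apply fsum_ext; intros l Hl. rewrite Nat.eqb_sym. ring. Qed.

Section MatPow.
Variables (N : nat) (K : nat -> nat -> R).
Hypothesis Ksym : forall a b, (a < N)%nat -> (b < N)%nat -> K a b = K b a.
Local Notation P := (matpow N K).

Lemma mp_add n k a b : (a < N)%nat -> (b < N)%nat -> P (n + k) a b = fsum N (fun l => P n a l * P k l b).
Proof. revert b; induction k; intros b Ha Hb.
  - rewrite Nat.add_0_r. simpl. rewrite fsum_ind_r; auto.
  - rewrite Nat.add_succ_r. simpl.
    rewrite (fsum_ext N _ (fun j => fsum N (fun l => P n a l * P k l j) * K j b)) by (intros; rewrite IHk; auto).
    rewrite (fsum_ext N (fun l => P n a l * fsum N (fun j => P k l j * K j b)) (fun l => fsum N (fun j => P n a l * P k l j * K j b))).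
    + rewrite fsum_swap. apply fsum_ext. intros. rewrite <- fsum_scal_r. auto.
    + intros. rewrite <- fsum_scal_l. apply fsum_ext; intros; ring. Qed.

Lemma mp_one a b : (a < N)%nat -> P 1 a b = K a b.
Proof. intros Ha. simpl. apply (fsum_ind_l N (fun l => K l b) a Ha). Qed.

Lemma mp_sym n a b : (a < N)%nat -> (b < N)%nat -> P n a b = P n b a.
Proof. revert a b; induction n; intros a b Ha Hb.
  - simpl. rewrite Nat.eqb_sym; auto.
  - change (S n) with (1 + n)%nat. rewrite (mp_add 1 n b a) by auto. simpl (P (1 + n) a b).
    apply fsum_ext. intros l Hl. rewrite mp_one by auto. rewrite Ksym, IHn by auto. ring. Qed.

Fixpoint vit (n : nat) (v : nat -> R) : nat -> R :=
  match n with O => v | S n' => app N K (vit n' v) end.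

Lemma mp_vit n v a : (a < N)%nat -> app N (P n) v a = vit n v a.
Proof. revert a; induction n; intros a Ha.
  - unfold app. simpl. apply (fsum_ind_l N v a Ha).
  - simpl vit. unfold app at 1. change (S n) with (1 + n)%nat.
    rewrite (fsum_ext N _ (fun b => fsum N (fun l => P 1 a l * P n l b) * v b)) by (intros; rewrite mp_add; auto).
    unfold app. rewrite (fsum_ext N (fun b => fsum N (fun l => P 1 a l * P n l b) * v b) (fun b => fsum N (fun l => P 1 a l * P n l b * v b))) by (intros; rewrite fsum_scal_r; auto).
    rewrite fsum_swap. apply fsum_ext. intros l Hl. rewrite mp_one by auto. rewrite <- IHn by auto. unfold app.
    rewrite <- fsum_scal_l. apply fsum_ext; intros; ring. Qed.

Lemma mp_quad n v : fsum N (fun a => fsum N (fun b => v a * P (n + n) a b * v b)) = nrm2 N (vit n v).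
Proof. unfold nrm2, dot.
  rewrite (fsum_ext N _ (fun a => fsum N (fun l => fsum N (fun b => v a * P n a l * (P n l b * v b))))).
  - rewrite (fsum_ext N (fun a => fsum N (fun l => fsum N (fun b => v a * P n a l * (P n l b * v b)))) (fun a => fsum N (fun l => v a * P n a l * vit n v l))).
    + rewrite fsum_swap. apply fsum_ext. intros l Hl. rewrite fsum_scal_r. f_equal.
      rewrite <- (mp_vit n v l Hl). unfold app. apply fsum_ext; intros. rewrite mp_sym by auto. ring.
    + intros a Ha. apply fsum_ext. intros l Hl. rewrite fsum_scal_l. rewrite <- (mp_vit n v l Hl). reflexivity.
  - intros a Ha. rewrite fsum_swap. apply fsum_ext. intros b Hb. rewrite mp_add by auto.
    rewrite <- fsum_scal_l, <- fsum_scal_r. apply fsum_ext; intros; ring.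
Qed.

Lemma mp_trace n : fsum N (fun a => P (n + n) a a) = fsum N (fun a => nrm2 N (P n a)).
Proof. apply fsum_ext. intros a Ha. rewrite mp_add by auto. unfold nrm2, dot. apply fsum_ext. intros l Hl.
  rewrite (mp_sym n l a) by auto. reflexivity. Qed.

Lemma mp_cs n x : nrm2 N (vit n x) <= fsum N (fun a => nrm2 N (P n a)) * nrm2 N x.
Proof. unfold nrm2 at 1, dot. rewrite <- fsum_scal_r. apply fsum_le. intros a Ha.
  rewrite <- (mp_vit n x a Ha). unfold app. fold (dot N (P n a) x).
  generalize (cauchy_schwarz N (P n a) x). simpl. lra. Qed.

End MatPow.

Lemma sq_le1 x : Rmult x x <= R1 -> Ropp R1 <= x /\ x <= R1.
Proof. intros H. change R1 with 1 in *. split; nra. Qed.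

End P8.
Import P8.

Module P9.
Local Open Scope R_scope.

Definition Wset (N : nat) (P : (nat -> R) -> Prop) (w : nat -> R) : Prop := forall chi, P chi -> dot N chi w = 0.

Definition EVTgen (N : nat) (K : nat -> nat -> R) : Prop :=
  forall P : (nat -> R) -> Prop, (exists w, Wset N P w /\ nrm2 N w = 1) ->
  exists w2, Wset N P w2 /\ nrm2 N w2 = 1 /\
    forall w, Wset N P w -> nrm2 N w = 1 -> nrm2 N (app N K w) <= nrm2 N (app N K w2).

Lemma fsum_minus n f g : fsum n (fun i => f i - g i) = fsum n f - fsum n g.
Proof. induction n; simpl; [ring|]. rewrite IHn; ring. Qed.

Section Core.
Variables (N : nat) (K : nat -> nat -> R) (C mu : R) (v : nat -> R).
Hypothesis Ksym : forall a b, (a < N)%nat -> (b < N)%nat -> K a b = K b a.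
Hypothesis Htr : forall n, fsum N (fun a => matpow N K (n + n) a a) <=
   C * fsum N (fun a => fsum N (fun b => v a * matpow N K (n + n) a b * v b)).
Hypothesis Heig : forall th u, (exists i, (i < N)%nat /\ u i <> 0) -> (forall i, (i < N)%nat -> app N K u i = th * u i) -> 0 < th /\ th <= mu.
Hypothesis Hchi0 : exists chi0, (exists i, (i < N)%nat /\ chi0 i <> 0) /\ forall i, (i < N)%nat -> app N K chi0 i = mu * chi0 i.
Hypothesis Hv : exists i, (i < N)%nat /\ v i <> 0.
Hypothesis Hevt : EVTgen N K.
Hypothesis HC : 0 <= C.

Definition eigmu (chi : nat -> R) : Prop := forall i, (i < N)%nat -> app N K chi i = mu * chi i.
Local Notation W := (Wset N eigmu).

Lemma dot_app_sym x y : dot N x (app N K y) = dot N (app N K x) y.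
Proof. unfold dot, app.
  rewrite (fsum_ext N (fun i => x i * fsum N (fun j => K i j * y j)) (fun i => fsum N (fun j => x i * K i j * y j))).
  - rewrite fsum_swap. apply fsum_ext. intros j Hj. rewrite <- fsum_scal_r. apply fsum_ext; intros i Hi. rewrite Ksym by auto. ring.
  - intros. rewrite <- fsum_scal_l. apply fsum_ext; intros; ring. Qed.

Lemma W_app w : W w -> W (app N K w).
Proof. intros Hw chi Hc. rewrite dot_app_sym. rewrite (dot_ext N _ w (fun i => mu * chi i) w) by auto.
  rewrite dot_scal_l, (Hw chi Hc). ring. Qed.

Lemma W_comb w y t : W w -> W y -> W (fun i => w i + t * y i).
Proof. intros Hw Hy chi Hc. rewrite dot_comb, Hw, Hy by auto. ring. Qed.

Lemma W_scal w c : W w -> W (fun i => c * w i).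
Proof. intros Hw chi Hc. rewrite dot_scal, Hw by auto. ring. Qed.

Lemma W_ext w y : (forall i, (i < N)%nat -> w i = y i) -> W w -> W y.
Proof. intros H Hw chi Hc. rewrite (dot_ext N chi y chi w); auto. intros; symmetry; auto. Qed.

Lemma nonzero_of_nrm2 x : nrm2 N x = 1 -> exists i, (i < N)%nat /\ x i <> 0.
Proof. intros H. apply NNPP. intros Hn. assert (nrm2 N x = 0); [|lra].
  unfold nrm2, dot. apply fsum_zero. intros i Hi. destruct (Req_dec (x i) 0) as [E|E]; [rewrite E; ring|].
  exfalso; apply Hn; eauto. Qed.

Theorem core : exists chi, eigmu chi /\ dot N chi v <> 0.
Proof.
  apply NNPP. intros Hn.
  assert (HvW : W v). { intros chi Hc. apply NNPP. intros Hd. apply Hn. exists chi. auto. }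
  assert (Hnv : 0 < nrm2 N v) by (apply nrm2_pos; auto).
  destruct (Hevt eigmu) as [w2 [Hw2 [Hn2 Hmax]]].
  { exists (fun i => / sqrt (nrm2 N v) * v i). split; [apply W_scal; auto|].
    rewrite nrm2_scal. assert (0 < sqrt (nrm2 N v)) by (apply sqrt_lt_R0; auto).
    replace ((/ sqrt (nrm2 N v)) ^ 2) with (/ (sqrt (nrm2 N v) * sqrt (nrm2 N v))) by (field; lra).
    rewrite sqrt_sqrt by lra. field. lra. }
  set (nu := nrm2 N (app N K w2)).
  assert (Hnu0 : 0 <= nu) by apply nrm2_nonneg.
  assert (Hbd : forall w, W w -> nrm2 N (app N K w) <= nu * nrm2 N w).
  { intros w Hw. destruct (Rle_lt_or_eq_dec _ _ (nrm2_nonneg N w)) as [Hp|E].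
    - set (s := sqrt (nrm2 N w)). assert (Hs : 0 < s) by (apply sqrt_lt_R0; auto).
      assert (Hss : s * s = nrm2 N w) by (apply sqrt_sqrt; lra).
      assert (H1 := Hmax (fun i => / s * w i) (W_scal w (/ s) Hw)).
      rewrite nrm2_scal in H1. rewrite (nrm2_ext N (app N K (fun i => / s * w i)) (fun i => / s * app N K w i)) in H1
        by (intros; apply app_scal). rewrite nrm2_scal in H1.
      replace ((/ s) ^ 2) with (/ (s * s)) in H1 by (field; lra). rewrite Hss in H1.
      assert (H2 : / nrm2 N w * nrm2 N (app N K w) <= nu) by (apply H1; field; lra).
      apply (Rmult_le_compat_l (nrm2 N w)) in H2; [|lra]. rewrite <- Rmult_assoc, Rinv_r, Rmult_1_l in H2 by lra. lra.
    - rewrite <- E. rewrite (nrm2_ext N (app N K w) (fun _ => 0)).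
      + unfold nrm2, dot. rewrite fsum_zero; [lra|]. intros; ring.
      + intros. unfold app. apply fsum_zero. intros. rewrite (nrm2_zero N w) by auto. ring. }
  set (B := fun i => nu * w2 i + (-1) * app N K (app N K w2) i).
  assert (HBW : W B) by (apply W_comb; [apply W_scal; auto| apply W_app, W_app; auto]).
  assert (HB0 : forall i, (i < N)%nat -> B i = 0).
  { apply nrm2_zero.
    set (s := nrm2 N B). set (h := nu * nrm2 N B - nrm2 N (app N K B)).
    assert (Hs0 : 0 <= s) by apply nrm2_nonneg.
    assert (Hh0 : 0 <= h) by (unfold h; generalize (Hbd B HBW); lra).
    assert (Hg : nu * dot N w2 B - dot N (app N K w2) (app N K B) = s).
    { rewrite dot_app_sym. unfold s, nrm2, dot. rewrite <- fsum_scal_l, <- fsum_minus.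
      apply fsum_ext. intros. unfold B. ring. }
    assert (Ht : forall t, 0 <= 2 * t * s + t ^ 2 * h).
    { intros t. assert (Hx := Hbd (fun i => w2 i + t * B i) (W_comb w2 B t Hw2 HBW)).
      rewrite (nrm2_ext N (app N K (fun i => w2 i + t * B i)) (fun a => app N K w2 a + t * app N K B a)) in Hx
        by (intros; apply app_comb).
      rewrite !nrm2_comb in Hx. fold nu in Hx. rewrite Hn2 in Hx. fold s in Hx.
      assert (HD : dot N (app N K w2) (app N K B) = nu * dot N w2 B - s) by lra.
      rewrite HD in Hx. unfold h. fold s. lra. }
    specialize (Ht (- s / (h + 1))).
    assert (Hq : 0 <= - (s * s) * (h + 2)).
    { apply (Rmult_le_compat_r ((h + 1) ^ 2)) in Ht; [|apply pow_le; lra].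
      replace ((2 * (- s / (h + 1)) * s + (- s / (h + 1)) ^ 2 * h) * (h + 1) ^ 2) with (- (s * s) * (h + 2)) in Ht by (field; lra).
      lra. }
    nra. }
  assert (HKK : forall i, (i < N)%nat -> app N K (app N K w2) i = nu * w2 i).
  { intros i Hi. generalize (HB0 i Hi). unfold B. lra. }
  set (rho := sqrt nu). assert (Hrho0 : 0 <= rho) by apply sqrt_pos.
  assert (Hrr : rho * rho = nu) by (apply sqrt_sqrt; auto).
  set (u := fun i => app N K w2 i + rho * w2 i).
  assert (Hu : forall i, (i < N)%nat -> app N K u i = rho * u i).
  { intros i Hi. unfold u. rewrite app_comb, HKK by auto. rewrite <- Hrr. ring. }
  assert (HuW : W u) by (apply W_comb; [apply W_app|]; auto).
  assert (Hrho : rho < mu).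
  { destruct (classic (exists i, (i < N)%nat /\ u i <> 0)) as [Hnz|Hz].
    - destruct (Heig rho u Hnz Hu) as [_ Hle]. destruct (Rle_lt_or_eq_dec _ _ Hle) as [|E]; auto.
      exfalso. assert (Hd : dot N u u = 0) by (apply HuW; intros i Hi; rewrite <- E; auto).
      destruct Hnz as [i [Hi Hui]]. apply Hui. apply (nrm2_zero N u); auto.
    - exfalso. assert (Hw : forall i, (i < N)%nat -> app N K w2 i = (- rho) * w2 i).
      { intros i Hi. destruct (Req_dec (u i) 0) as [E|E]; [unfold u in E; lra|]. exfalso; apply Hz; eauto. }
      destruct (Heig (- rho) w2 (nonzero_of_nrm2 w2 Hn2) Hw). lra. }
  destruct Hchi0 as [chi0 [Hnz0 Hc0]].
  assert (Hmu : 0 < mu) by (apply (Heig mu chi0); auto).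
  assert (Hvit : forall n, W (vit N K n v) /\ nrm2 N (vit N K n v) <= nu ^ n * nrm2 N v).
  { induction n; simpl. - split; auto; lra.
    - destruct IHn as [IH1 IH2]. split; [apply W_app; auto|].
      apply Rle_trans with (nu * nrm2 N (vit N K n v)); [apply Hbd; auto|]. rewrite Rmult_assoc. apply Rmult_le_compat_l; auto. }
  assert (Hchin : forall n i, (i < N)%nat -> vit N K n chi0 i = mu ^ n * chi0 i).
  { induction n; intros i Hi; simpl. - ring.
    - rewrite (app_ext N K _ (fun j => mu ^ n * chi0 j)) by auto. rewrite app_scal, Hc0 by auto. ring. }
  assert (Hnc : 0 < nrm2 N chi0) by (apply nrm2_pos; auto).
  assert (Hall : forall n, (mu * mu) ^ n <= C * nrm2 N v * nu ^ n).
  { intros n. assert (H1 := mp_cs N K n chi0).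
    rewrite (nrm2_ext N _ (fun i => mu ^ n * chi0 i)) in H1 by (intros; apply Hchin; auto).
    rewrite nrm2_scal in H1. rewrite <- (mp_trace N K Ksym) in H1.
    assert (H2 := Htr n). rewrite mp_quad in H2 by auto.
    assert (H3 : (mu ^ n) ^ 2 <= fsum N (fun a => matpow N K (n + n) a a)).
    { apply (Rmult_le_reg_r (nrm2 N chi0)); auto. }
    destruct (Hvit n) as [_ H4].
    rewrite Rpow_mult_distr. replace ((mu ^ n) ^ 2) with (mu ^ n * mu ^ n) in H3 by ring.
    apply Rle_trans with (1 := H3). apply Rle_trans with (1 := H2).
    replace (C * nrm2 N v * nu ^ n) with (C * (nu ^ n * nrm2 N v)) by ring.
    apply Rmult_le_compat_l; auto. }
  set (q := nu / (mu * mu)).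
  assert (Hq0 : 0 <= q) by (unfold q; apply Rmult_le_pos; [auto|apply Rlt_le, Rinv_0_lt_compat; nra]).
  assert (Hq1 : q < 1).
  { unfold q. apply (Rmult_lt_reg_r (mu * mu)); [nra|]. unfold Rdiv. rewrite Rmult_assoc, Rinv_l by nra. nra. }
  assert (HX : forall n, 1 <= C * nrm2 N v * q ^ n).
  { intros n. assert (H := Hall n). replace nu with (q * (mu * mu)) in H by (unfold q; field; nra).
    rewrite (Rpow_mult_distr q (mu * mu)) in H. assert (0 < (mu * mu) ^ n) by (apply pow_lt; nra).
    apply (Rmult_le_reg_r ((mu * mu) ^ n)); auto. rewrite Rmult_1_l, Rmult_assoc; exact H. }
  assert (HX0 := HX 0%nat). simpl in HX0.
  destruct (pow_lt_1_zero q ltac:(rewrite Rabs_right; lra) (/ (C * nrm2 N v)) ltac:(apply Rinv_0_lt_compat; lra)) as [M HM].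
  specialize (HM M (le_n M)). rewrite Rabs_right in HM by (apply Rle_ge, pow_le; auto).
  specialize (HX M). apply (Rmult_lt_compat_l (C * nrm2 N v)) in HM; [|lra].
  rewrite Rinv_r in HM by lra. lra.
Qed.
End Core.

End P9.
Import P9.

Module P11.
Local Open Scope R_scope.

Lemma fsum_app m r f : fsum (m + r) f = fsum m f + fsum r (fun i => f (m + i)%nat).
Proof. induction r. - rewrite Nat.add_0_r. simpl. ring.
  - rewrite Nat.add_succ_r. simpl. rewrite IHr. ring. Qed.

Lemma quad_lower N (A : nat -> nat -> R) (c : R) (u : nat -> R) :
  (forall a b, (a < N)%nat -> (b < N)%nat -> 0 <= A a b <= c) ->
  - (c * INR N) * nrm2 N u <= dot N u (app N A u).
Proof. intros HA. unfold dot, app.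
  apply Rle_trans with (fsum N (fun a => fsum N (fun b => - c / 2 * (u a * u a) + - c / 2 * (u b * u b)))).
  - right. unfold nrm2, dot.
    assert (E : fsum N (fun a => fsum N (fun b => - c / 2 * (u a * u a) + - c / 2 * (u b * u b))) =
                fsum N (fun a => INR N * (- c / 2) * (u a * u a) + - c / 2 * fsum N (fun b => u b * u b))).
    { apply fsum_ext. intros a Ha. rewrite fsum_plus, fsum_const, fsum_scal_l. ring. }
    rewrite E, fsum_plus, fsum_scal_l, fsum_const. lra.
  - apply fsum_le. intros a Ha. rewrite <- fsum_scal_l. apply fsum_le. intros b Hb.
    destruct (HA a b Ha Hb). assert (0 <= A a b * ((u a + u b) * (u a + u b))) by (apply Rmult_le_pos; [lra| apply Rle_0_sqr]). assert (0 <= (c - A a b) * (u a * u a + u b * u b)) by (apply Rmult_le_pos; [lra| generalize (Rle_0_sqr (u a)) (Rle_0_sqr (u b)); unfold Rsqr; lra]). nra.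
Qed.

Section Part2.
Variables twoS L : nat.
Hypothesis H2S : (1 <= twoS)%nat.
Local Notation d := (ldim twoS).
Local Notation N := (hdim twoS L).
Local Notation m := (2 * L - 1)%nat.
Local Notation G := (Gs twoS L).

Lemma gen_sym p a b : gen twoS L p a b = gen twoS L p b a.
Proof. unfold gen. destruct (p <? m)%nat.
  - unfold Eb. rewrite (Nat.eqb_sym (a mod _)), (Nat.eqb_sym (a / _)).
    destruct (_ =? _)%nat, (_ =? _)%nat, (digit d a (S p) =? _)%nat, (digit d b (S p) =? _)%nat; reflexivity.
  - rewrite Nat.eqb_sym. auto. Qed.

Lemma Ar_sym r a b : Ar twoS L r a b = Ar twoS L r b a.
Proof. unfold Ar. apply fsum_ext; intros; apply gen_sym. Qed.

Lemma Ar_split r a b : Ar twoS L r a b = Ar twoS L 0 a b + INR r * ind (a =? b)%nat.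
Proof. unfold Ar. rewrite fsum_app, Nat.add_0_r. f_equal.
  rewrite (fsum_ext r _ (fun _ => ind (a =? b)%nat)); [rewrite fsum_const; auto|].
  intros i Hi. unfold gen. replace (m + i <? m)%nat with false; auto. symmetry. apply Nat.ltb_ge. lia. Qed.

Lemma app_Ar_split r u i : (i < N)%nat -> app N (Ar twoS L r) u i = app N (Ar twoS L 0) u i + INR r * u i.
Proof. intros Hi. unfold app. rewrite (fsum_ext N _ (fun j => Ar twoS L 0 i j * u j + INR r * (ind (i =? j)%nat * u j)))
  by (intros; rewrite Ar_split; ring). rewrite fsum_plus, fsum_scal_l, fsum_ind_l; auto. Qed.

Lemma Ar0_bounds a b : 0 <= Ar twoS L 0 a b <= INR m.
Proof. unfold Ar. rewrite Nat.add_0_r. split.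
  - apply fsum_nonneg; intros; apply gen_nonneg.
  - rewrite <- (Rmult_1_r (INR m)), <- fsum_const. apply fsum_le; intros. unfold gen.
    destruct (i <? m)%nat; apply ind_le1. Qed.

Lemma Ham_app phi i : mapply N (Ham twoS L) phi i = - G i * app N (Ar twoS L 0) (fun j => G j * phi j) i.
Proof. unfold mapply, app. rewrite <- fsum_scal_l. apply fsum_ext; intros j Hj. rewrite Ham_gauge by auto. ring. Qed.

Lemma G_nz a : G a <> 0.
Proof. intros E. generalize (Gs_sq twoS L a). rewrite E. lra. Qed.

Lemma part2 (Hevt : forall N K, EVTgen N K) E0 : is_ground_energy N (Ham twoS L) E0 ->
  exists psi : nat -> R,
       (forall i, (i < N)%nat -> mapply N (Ham twoS L) psi i = E0 * psi i)
       /\ fsum N (fun a => psi a * Dvec twoS L a) <> 0.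
Proof. intros [[phi0 [Hnz0 Hphi0]] Hmin].
  set (r := (m * N + 1)%nat). set (K := Ar twoS L r). set (mu := INR r - E0).
  assert (HGG : forall a, G a * G a = 1) by (intros; apply Gs_sq; auto).
  assert (Hcorr : forall th u, (forall i, (i < N)%nat -> app N K u i = th * u i) ->
            forall i, (i < N)%nat -> mapply N (Ham twoS L) (fun j => G j * u j) i = (INR r - th) * (G i * u i)).
  { intros th u Hu i Hi. rewrite Ham_app.
    rewrite (app_ext N _ _ u) by (intros; rewrite <- Rmult_assoc, HGG; ring).
    assert (app N (Ar twoS L 0) u i = th * u i - INR r * u i) by (rewrite <- Hu by auto; unfold K; rewrite (app_Ar_split r); auto; ring).
    rewrite H. ring. }
  assert (Hnzg : forall u, (exists i, (i < N)%nat /\ u i <> 0) -> exists i, (i < N)%nat /\ G i * u i <> 0).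
  { intros u [i [Hi Hui]]. exists i. split; auto. intros E. apply Rmult_integral in E. destruct E; [apply (G_nz i)|]; auto. }
  destruct (core N K (INR (d ^ L)) mu (Sind twoS L)) as [chi [Hchi Hdot]].
  - intros; apply Ar_sym.
  - intros n. apply trace_ineq; auto.
  - intros th u Hnz Hu. split.
    + assert (Hq := quad_lower N (Ar twoS L 0) (INR m) u (fun a b _ _ => Ar0_bounds a b)).
      assert (Heq : dot N u (app N (Ar twoS L 0) u) = (th - INR r) * nrm2 N u).
      { unfold nrm2, dot. rewrite <- fsum_scal_l. apply fsum_ext; intros i Hi.
        assert (app N (Ar twoS L 0) u i = th * u i - INR r * u i) by (rewrite <- Hu by auto; unfold K; rewrite (app_Ar_split r); auto; ring).
        rewrite H. ring. }
      assert (Hpos := nrm2_pos N u Hnz).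
      assert (INR r = INR m * INR N + 1) by (unfold r; rewrite plus_INR, mult_INR; simpl; ring).
      rewrite Heq in Hq. assert (- (INR m * INR N) <= th - INR r) by (apply (Rmult_le_reg_r (nrm2 N u)); auto; lra).
      lra.
    + assert (E0 <= INR r - th); [|unfold mu; lra].
      apply (Hmin (INR r - th) (fun j => G j * u j)); auto.
  - exists (fun j => G j * phi0 j). split.
    + destruct Hnz0 as [i [Hi Hp]]. exists i; split; auto. intros E. apply Rmult_integral in E. destruct E; [apply (G_nz i)|]; auto.
    + intros i Hi. unfold K. rewrite (app_Ar_split r) by auto.
      assert (H := Hphi0 i Hi). rewrite Ham_app in H.
      assert (app N (Ar twoS L 0) (fun j => G j * phi0 j) i = - E0 * (G i * phi0 i)).
      { apply (Rmult_eq_reg_l (- G i)); [|generalize (G_nz i); lra].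
        rewrite H. replace (- G i * (- E0 * (G i * phi0 i))) with (E0 * phi0 i * (G i * G i)) by ring. rewrite HGG. ring. }
      rewrite H0. unfold mu. ring.
  - exists (enc d (2 * L) (cst twoS)). split.
    + unfold hdim. apply enc_lt; [apply d_gt1; auto|]. intros; apply cst_lt; auto.
    + rewrite Sind_allb. replace (allb L (Sb twoS (enc d (2 * L) (cst twoS)))) with true; [simpl; lra|].
      symmetry. apply allb_spec. intros j Hj. unfold Sb. apply Nat.eqb_eq.
      rewrite !digit_enc; try (apply d_gt1; auto); try (intros; apply cst_lt); try lia.
      unfold cst. rewrite Nat.add_1_r, Nat.even_succ, Nat.odd_mul, Nat.even_mul. simpl. lia.
  - apply Hevt.
  - apply pos_INR.
  - exists (fun j => G j * chi j). split.
    + intros i Hi. rewrite Ham_app.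
      rewrite (app_ext N _ _ chi) by (intros; rewrite <- Rmult_assoc, HGG; ring).
      assert (app N (Ar twoS L 0) chi i = mu * chi i - INR r * chi i) by (rewrite <- Hchi by auto; unfold K; rewrite (app_Ar_split r); auto; ring).
      rewrite H. unfold mu. ring.
    + rewrite (fsum_ext N _ (fun a => chi a * Sind twoS L a)); auto.
      intros a Ha. rewrite Dvec_Sind by auto. replace (G a * chi a * (Sind twoS L a * G a)) with (chi a * Sind twoS L a * (G a * G a)) by ring.
      rewrite HGG. ring.
Qed.
End Part2.

End P11.
Import P11.

Module P10.
From mathcomp Require Import all_boot all_order all_algebra.
From mathcomp Require Import boolp classical_sets topology normedtype derive.
From mathcomp Require Import Rstruct Rstruct_topology.

Set Implicit Arguments.
Unset Strict Implicit.
Unset Printing Implicit Defensive.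
Local Open Scope classical_set_scope.
Local Open Scope ring_scope.

Section EVT.
Variable n : nat.
Local Notation V := ('rV[R]_n.+1).

Definition toF (c : V) : nat -> R := fun i => c ord0 (inord i).

Lemma contD (f g : V -> R) : continuous f -> continuous g -> continuous (fun c => Rplus (f c) (g c)).
Proof. move=> cf cg x. exact: (@continuousD R R^o _ f g x (cf x) (cg x)). Qed.

Lemma contM (f g : V -> R) : continuous f -> continuous g -> continuous (fun c => Rmult (f c) (g c)).
Proof. move=> cf cg x. exact: (@continuousM R _ f g x (cf x) (cg x)). Qed.

Lemma contC (r : R) : continuous (fun _ : V => r).
Proof. exact: cst_continuous. Qed.

Lemma contF i : continuous (fun c : V => toF c i).
Proof. move=> x. exact: (@coord_continuous R 1 n.+1 ord0 (inord i) x). Qed.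

Lemma contS m (F : nat -> V -> R) : (forall i, continuous (F i)) -> continuous (fun c => fsum m (fun i => F i c)).
Proof. move=> HF. elim: m => [|m IH] /=; first exact: contC. exact: contD. Qed.

Lemma cont_dot (chi : nat -> R) : continuous (fun c => dot n.+1 chi (toF c)).
Proof. apply: contS => i. apply: contM; [exact: contC|exact: contF]. Qed.

Lemma cont_nrm2 : continuous (fun c => nrm2 n.+1 (toF c)).
Proof. apply: contS => i. apply: contM; exact: contF. Qed.

Lemma cont_f (K : nat -> nat -> R) : continuous (fun c => nrm2 n.+1 (app n.+1 K (toF c))).
Proof. have ca : forall a, continuous (fun c => app n.+1 K (toF c) a).
    move=> a. apply: contS => i. apply: contM; [exact: contC|exact: contF].
  apply: contS => i. exact: contM. Qed.

Lemma toF_row (w : nat -> R) i : (i < n.+1)%nat -> toF (\row_j w (nat_of_ord j)) i = w i.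
Proof. move=> Hi. by rewrite /toF mxE inordK. Qed.

End EVT.

Lemma toF_row' n (w : nat -> R) i : (i < n.+1)%coq_nat -> toF (\row_j w (nat_of_ord j) : 'rV[R]_n.+1) i = w i.
Proof. move=> Hi. apply: toF_row. exact/ltP. Qed.

Lemma evt_all N K : EVTgen N K.
Proof.
move=> P [w [Hw Hw1]].
case: N K P w Hw Hw1 => [|n] K P w Hw Hw1.
  by move: Hw1; rewrite /nrm2 /dot /=; lra.
have agree : forall c : 'rV[R]_n.+1, forall w : nat -> R, (forall i, (i < n.+1)%coq_nat -> toF c i = w i) ->
   (Wset n.+1 P (toF c) <-> Wset n.+1 P w) /\ nrm2 n.+1 (toF c) = nrm2 n.+1 w /\
   nrm2 n.+1 (app n.+1 K (toF c)) = nrm2 n.+1 (app n.+1 K w).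
  move=> c w' H. split; [|split].
  - split => HW chi Hc; rewrite -(HW chi Hc); apply: dot_ext => // i Hi; by rewrite H.
  - exact: nrm2_ext.
  - apply: nrm2_ext => i Hi. exact: app_ext.
have rowag := @toF_row' n.
pose A := [set c : 'rV[R]_n.+1 | Wset n.+1 P (toF c) /\ nrm2 n.+1 (toF c) = R1]%classic.
have A0 : A !=set0.
  exists (\row_j w (nat_of_ord j)). have [H1 [H2 _]] := agree _ _ (rowag w). split; [exact/H1|by rewrite H2].
have cA : compact A.
  apply: (@subclosed_compact _ A [set v : 'rV[R]_n.+1 | forall i, `[Ropp R1, R1]%classic (v ord0 i)]).
  - have -> : A = (\bigcap_(chi in P) ((fun c => dot n.+1 chi (toF c)) @^-1` [set R0])) `&`
        ((fun c => nrm2 n.+1 (toF c)) @^-1` [set R1]).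
      rewrite /A; apply/seteqP; split => c /=.
      + case=> H1 H2. split; last exact: H2. move=> chi Hc /=. exact: H1.
      + case=> H1 H2. split; last exact: H2. move=> chi Hc /=. exact: H1.
    apply: closedI.
    + apply: closed_bigI => chi _. apply: preimage_closed; last exact: closed_eq.
      move=> x _. exact: cont_dot.
    + apply: preimage_closed; last exact: closed_eq. move=> x _. exact: cont_nrm2.
  - have HH := @rV_compact R n.+1 (fun _ => `[Ropp R1, R1]%classic) (fun _ => @segment_compact _ (Ropp R1) R1). exact: HH.
  - move=> c [_ Hc] i /=. rewrite in_itv /=.
    have Hi : (i < n.+1)%coq_nat by apply/ltP.
    have := fsum_single_le n.+1 (fun j => toF c j * toF c j) i.
    rewrite /nrm2 /dot in Hc. rewrite Hc => Hle. have {}Hle := Hle (fun j _ => Rle_0_sqr (toF c j)) Hi.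
    rewrite /toF inord_val in Hle.
    have [HA HB] := sq_le1 (c ord0 i) Hle. by apply/andP; split; apply/RleP.
have cf : {within A, continuous (fun c => nrm2 n.+1 (app n.+1 K (toF c)))}.
  apply: continuous_subspaceT. exact: cont_f.
have [c cA' Hmax] := EVT_max_rV A0 cA cf.
move: cA'; rewrite inE => -[HcW Hc1].
exists (toF c); split => //; split => //.
move=> w' Hw' Hw'1.
have [H1 [H2 H3]] := agree _ _ (rowag w').
rewrite -H3. apply/RleP. apply: Hmax. rewrite inE. split; [exact/H1|by rewrite H2].
Qed.

End P10.

Theorem mainTheorem15 (twoS L : nat) (beta : R) (E : nat -> nat -> R) :
  (1 <= twoS)%nat -> 0 < beta ->
  is_mexp (hdim twoS L) (fun a b => - beta * Ham twoS L a b) E ->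
  fsum (hdim twoS L) (fun a => fsum (hdim twoS L)
          (fun b => Dvec twoS L a * E a b * Dvec twoS L b))
    / fsum (hdim twoS L) (fun a => E a a)
  >= / (INR (ldim twoS) ^ L)
  /\
  (forall E0 : R, is_ground_energy (hdim twoS L) (Ham twoS L) E0 ->
     exists psi : nat -> R,
       (forall i, (i < hdim twoS L)%nat -> mapply (hdim twoS L) (Ham twoS L) psi i = E0 * psi i)
       /\ fsum (hdim twoS L) (fun a => psi a * Dvec twoS L a) <> 0).
Proof.
  intros H2S Hb HE. split.
  - exact (P7.part1 twoS L H2S beta E Hb HE).
  - intros E0 HE0. exact (P11.part2 twoS L H2S P10.evt_all E0 HE0).
Qed.
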